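(* Let $R=k[x_1,\dots,x_n]$ be a polynomial ring over a field $k$, let $I$ be a monomial ideal of $R$, and let $t\ge 1$. Then $I^{(t)}$ is integrally closed if and only if $I_F^t$ is integrally closed for all $F\in\mathcal F(I)$.
   Context: For $F\subseteq[n]$, $P_F$ is the ideal generated by the variables $x_i$ with $i\notin F$. $\mathcal F(I)$ is the set of all $F\subseteq[n]$ such that $P_F$ is a minimal prime of $I$ (every minimal prime of a monomial ideal has this form), and for $F\in\mathcal F(I)$, $I_F$ denotes the (monomial) primary component of $I$ associated with $P_F$. The $t$-th symbolic power $I^{(t)}$ is the intersection of the primary components of $I^t$ associated with the minimal primes of $I$. *)

(* Defs.v *)
From HB Require Import structures.
From mathcomp Require Import all_boot all_order all_algebra.
From mathcomp Require Import mpoly.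

Set Implicit Arguments.
Unset Strict Implicit.
Unset Printing Implicit Defensive.

Import GRing.Theory.
Local Open Scope ring_scope.

Section MonomialIdeals.
Variables (k : fieldType) (n : nat).
Local Notation R := {mpoly k[n]}.

Definition pset := R -> Prop.

Definition psubset (I J : pset) : Prop := forall f, I f -> J f.

Definition ideal_gen (S : pset) : pset :=
  fun f => exists (m : nat) (c a : 'I_m -> R),
      (forall i, S (a i)) /\ f = \sum_(i < m) c i * a i.

Definition is_ideal (I : pset) : Prop :=
  [/\ I 0, (forall f g, I f -> I g -> I (f + g)) &
      (forall r f, I f -> I (r * f))].

Definition prime_ideal (P : pset) : Prop :=
  [/\ is_ideal P, ~ P 1 & (forall a b, P (a * b) -> P a \/ P b)].

Definition monomial_ideal (I : pset) : Prop :=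
  exists M : 'X_{1..n} -> Prop,
    forall f, I f <-> ideal_gen (fun g => exists m, M m /\ g = 'X_[m]) f.

Definition ideal_pow (I : pset) (t : nat) : pset :=
  ideal_gen (fun f => exists a : 'I_t -> R,
                 (forall i, I (a i)) /\ f = \prod_(i < t) a i).

Definition PF (F : {set 'I_n}) : pset :=
  ideal_gen (fun f => exists i : 'I_n, i \notin F /\ f = 'X_i).

Definition minimal_prime (I P : pset) : Prop :=
  [/\ prime_ideal P, psubset I P &
      (forall Q, prime_ideal Q -> psubset I Q -> psubset Q P -> psubset P Q)].

Definition inFI (I : pset) (F : {set 'I_n}) : Prop := minimal_prime I (PF F).

(* Primary component of I associated with the (minimal) prime P_F:
   I R_{P_F} \cap R. *)
Definition component (I : pset) (F : {set 'I_n}) : pset :=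
  fun f => exists g, ~ PF F g /\ I (g * f).

Definition symbolic_pow (I : pset) (t : nat) : pset :=
  fun f => forall F, inFI I F -> component (ideal_pow I t) F f.

Definition integral_over_ideal (J : pset) (r : R) : Prop :=
  exists (m : nat) (a : nat -> R),
    [/\ (0 < m)%N, (forall i, (1 <= i <= m)%N -> ideal_pow J i (a i)) &
        r ^+ m + \sum_(1 <= i < m.+1) a i * r ^+ (m - i) = 0].

Definition integrally_closed (J : pset) : Prop :=
  forall r, integral_over_ideal J r -> J r.

End MonomialIdeals.

(* Main.v *)
Require Import Defs.
From HB Require Import structures.
From mathcomp Require Import all_boot all_order all_algebra.
From mathcomp Require Import mpoly.
From Stdlib Require Import ClassicalEpsilon.
From mathcomp Require Import ring zify.

Set Implicit Arguments.
Unset Strict Implicit.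
Unset Printing Implicit Defensive.
Import GRing.Theory.
Local Open Scope ring_scope.

Section Proof.
Variables (k : fieldType) (n : nat).
Local Notation R := {mpoly k[n]}.
Local Notation PFk F := (@PF k n F).
Implicit Types (f g : R).

Lemma gen_sub (S : pset k n) f : S f -> ideal_gen S f.
Proof.
move=> Sf; exists 1%N, (fun=> 1), (fun=> f); split=> //.
by rewrite big_ord1 mul1r.
Qed.

Lemma gen_ideal (S : pset k n) : is_ideal (ideal_gen S).
Proof.
split.
- exists 0%N, (fun=> 0), (fun=> 0); split; first by case.
  by rewrite big_ord0.
- move=> f g [m1 [c1 [a1 [Ha1 ->]]]] [m2 [c2 [a2 [Ha2 ->]]]].
  exists (m1 + m2)%N,
    (fun j => match split j with inl j1 => c1 j1 | inr j2 => c2 j2 end),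
    (fun j => match split j with inl j1 => a1 j1 | inr j2 => a2 j2 end); split.
  + by move=> j; case: (split j).
  + rewrite big_split_ord /=; congr (_ + _); apply: eq_bigr => j _.
    * by have -> : split (lshift m2 j) = inl j := unsplitK (inl j).
    * by have -> : split (rshift m1 j) = inr j := unsplitK (inr j).
- move=> r f [m [c [a [Ha ->]]]].
  exists m, (fun i => r * c i), a; split=> //.
  by rewrite mulr_sumr; apply: eq_bigr => i _; rewrite mulrA.
Qed.

Lemma gen_min (S J : pset k n) : is_ideal J -> (forall f, S f -> J f) ->
  forall f, ideal_gen S f -> J f.
Proof.
case=> J0 JD JM SJ f [m [c [a [Ha ->]]]].
apply: (big_ind J) => //= i _; exact/JM/SJ.
Qed.

Lemma ideal_sum (J : pset k n) (T : eqType) (r : seq T) (F : T -> R) :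
  is_ideal J -> (forall i, i \in r -> J (F i)) -> J (\sum_(i <- r) F i).
Proof.
case=> J0 JD JM H; rewrite big_seq; apply: (big_ind J) => //.
Qed.

Lemma pow_ideal (J : pset k n) t : is_ideal (ideal_pow J t).
Proof. exact: gen_ideal. Qed.

Lemma pow_mono (J K : pset k n) t : (forall f, J f -> K f) ->
  forall f, ideal_pow J t f -> ideal_pow K t f.
Proof.
move=> JK; apply: gen_min; first exact: gen_ideal.
move=> _ [a [Ha ->]]; apply: gen_sub; exists a; split=> // i; exact/JK.
Qed.

Lemma pow0 (J : pset k n) f : ideal_pow J 0 f.
Proof.
rewrite -[f]mulr1; case: (pow_ideal J 0) => _ _ HM; apply: HM.
apply: gen_sub; exists (fun=> 1); split; first by case.
by rewrite big_ord0.
Qed.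

Lemma pow_mul (K : pset k n) t x y :
  ideal_pow K t x -> K y -> ideal_pow K t.+1 (x * y).
Proof.
move=> Hx Ky; pose J := fun x => ideal_pow K t.+1 (x * y).
have JI : is_ideal J.
  case: (pow_ideal K t.+1) => H0 HD HM.
  split; rewrite /J.
  - by rewrite mul0r.
  - by move=> f g Hf Hg; rewrite mulrDl; apply: HD.
  - by move=> r f Hf; rewrite -mulrA; apply: HM.
apply: (gen_min JI) Hx => _ [a [Ha ->]]; rewrite /J.
apply: gen_sub.
exists (fun j : 'I_t.+1 => if unlift ord_max j is Some j' then a j' else y); split.
- by move=> j; case: (unlift ord_max j).
- rewrite big_ord_recr /= unlift_none; congr (_ * _); apply: eq_bigr => j _.
  have -> : widen_ord (leqnSn t) j = lift ord_max j.
    by apply: val_inj; rewrite /= /bump leqNgt ltn_ord.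
  by rewrite liftK.
Qed.

Lemma comp_ideal (K : pset k n) F : prime_ideal (PFk F) -> is_ideal K ->
  is_ideal (component K F).
Proof.
case=> _ nP1 Pm [K0 KD KM]; split.
- by exists 1; split=> //; rewrite mulr0.
- move=> f g [g1 [n1 H1]] [g2 [n2 H2]]; exists (g1 * g2); split.
  + by case/Pm.
  + rewrite mulrDr; apply: KD.
    * by rewrite [g1 * g2]mulrC -mulrA; apply: KM.
    * by rewrite -mulrA; apply: KM.
- move=> r f [g [ng H]]; exists g; split=> //; rewrite mulrCA; exact: KM.
Qed.

Lemma comp_pow (K : pset k n) F t : prime_ideal (PFk F) -> is_ideal K ->
  forall f, ideal_pow (component K F) t f -> component (ideal_pow K t) F f.
Proof.
move=> HP KI; apply: gen_min; first by apply: comp_ideal => //; exact: pow_ideal.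
move=> _ [a [Ha ->]]; have [_ nP1 Pm] := HP.
elim: t a Ha => [|t IH] a Ha.
  by exists 1; split=> //; exact: pow0.
rewrite big_ord_recr /=.
have [g1 [ng1 H1]] := IH (fun j => a (widen_ord (leqnSn t) j)) (fun j => Ha _).
have [g2 [ng2 H2]] := Ha ord_max.
exists (g1 * g2); split; first by case/Pm.
rewrite mulrACA; exact: pow_mul.
Qed.


Definition Lp (B : 'X_{1..n} -> Prop) f := forall e, e \in msupp f -> B e.
Definition upc (B : 'X_{1..n} -> Prop) := forall a b, B a -> (a <= b)%MM -> B b.

Lemma Lp_ideal B : upc B -> is_ideal (Lp B).
Proof.
move=> uB; split.
- by move=> e; rewrite mcoeff_msupp mcoeff0 eqxx.
- move=> f g Hf Hg e /msuppD_le; rewrite mem_cat => /orP[/Hf|/Hg] //.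
- move=> r f Hf e /msuppM_le /allpairsP [[m1 m2] /= [_ /Hf Bm2 ->]].
  apply: uB Bm2 _; exact: lem_addl.
Qed.

Lemma mono_mem (K : pset k n) f : is_ideal K ->
  (forall e, e \in msupp f -> K 'X_[e]) -> K f.
Proof.
move=> KI H; rewrite [f]mpolyE; apply: ideal_sum => // e He.
case: KI => _ _ KM; rewrite -mul_mpolyC; exact/KM/H.
Qed.

Definition upM (M : 'X_{1..n} -> Prop) e := exists m, M m /\ (m <= e)%MM.

Lemma upM_upc M : upc (upM M).
Proof. move=> a b [m [Mm le]] ab; exists m; split=> //; exact: lepm_trans ab. Qed.

Lemma gen_mono_fwd (M : 'X_{1..n} -> Prop) f :
  ideal_gen (fun g : R => exists m, M m /\ g = 'X_[m]) f -> Lp (upM M) f.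
Proof.
apply: gen_min; first by apply/Lp_ideal/upM_upc.
move=> _ [m [Mm ->]] e; rewrite msuppX mem_seq1 => /eqP ->.
by exists m; split=> //; exact: lepm_refl.
Qed.

Definition Zob (F : {set 'I_n}) (a : 'X_{1..n}) :=
  [forall i, (i \notin F) ==> (a i == 0%N)].

Lemma PF_Lp F f : PFk F f -> Lp (fun e => exists i, i \notin F /\ (0 < e i)%N) f.
Proof.
apply: gen_min.
  apply: Lp_ideal => a b [i [Hi Ha]] /mnm_lepP Hab.
  by exists i; split=> //; exact: leq_trans Ha (Hab i).
move=> _ [i [Hi ->]] e; rewrite msuppX mem_seq1 => /eqP ->.
by exists i; split=> //; rewrite mnm1E eqxx.
Qed.

Lemma X_notin_PF F a : Zob F a -> ~ PFk F 'X_[a].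
Proof.
move=> /forallP Za /PF_Lp /(_ a); rewrite msuppX mem_seq1 eqxx => /(_ isT).
by case=> i [Hi]; move: (Za i); rewrite Hi /= => /eqP ->.
Qed.

Lemma notPF_supp F g : ~ PFk F g -> exists2 a, a \in msupp g & Zob F a.
Proof.
move=> nP; case: (boolP (has (Zob F) (msupp g))) => [/hasP [a Ha Za]|/hasPn H].
  by exists a.
exfalso; apply: nP; apply: mono_mem; first exact: gen_ideal.
move=> e /H; rewrite negb_forall => /existsP [i]; rewrite negb_imply => /andP [Hi Hei].
have le : (U_(i) <= e)%MM by rewrite lep1mP.
rewrite -(submK le) mpolyXD; case: (gen_ideal (fun f : R => exists i : 'I_n, i \notin F /\ f = 'X_i)) => _ _ HM.
apply: HM; apply: gen_sub; by exists i.
Qed.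

Fixpoint Bp (B : 'X_{1..n} -> Prop) t e : Prop :=
  if t is t'.+1 then exists a b, [/\ B a, Bp B t' b & (a + b <= e)%MM] else True.

Lemma Bp_upc B t : upc (Bp B t).
Proof.
case: t => [//|t] a b [x [y [Bx By le]]] ab; exists x, y; split=> //.
exact: lepm_trans ab.
Qed.

Lemma Bp_mono (B B' : 'X_{1..n} -> Prop) t e : (forall a, B a -> B' a) ->
  Bp B t e -> Bp B' t e.
Proof.
move=> BB'; elim: t e => [//|t IH] e [x [y [Bx By le]]].
by exists x, y; split=> //; [exact: BB' | exact: IH].
Qed.

Lemma prod_Lp B t (a : 'I_t -> R) : (forall j, Lp B (a j)) ->
  Lp (Bp B t) (\prod_(j < t) a j).
Proof.
elim: t a => [|t IH] a Ha; first by [].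
rewrite big_ord_recr => e /msuppM_le /allpairsP [[e1 e2] /= [H1 H2 ->]].
exists e2, e1; split.
- exact: (Ha ord_max).
- exact: (IH (fun j => a (widen_ord (leqnSn t) j))).
- rewrite addmC; exact: lepm_refl.
Qed.

Lemma monoLp (K : pset k n) B t : is_ideal K -> (forall b, B b -> K 'X_[b]) ->
  forall f, Lp (Bp B t) f -> ideal_pow K t f.
Proof.
move=> KI HB.
have Hm : forall e, Bp B t e -> ideal_pow K t 'X_[e].
  elim: t => [|t IH] e; first by move=> _; exact: pow0.
  case=> [a [b [Ba Bb le]]].
  rewrite -(submK le) mpolyXD.
  case: (pow_ideal K t.+1) => _ _ HM; apply: HM.
  rewrite addmC mpolyXD; apply: pow_mul; [exact: IH | exact: HB].
move=> f Hf; apply: mono_mem; first exact: pow_ideal.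
by move=> e /Hf; exact: Hm.
Qed.

Definition res (F : {set 'I_n}) (e : 'X_{1..n}) : 'X_{1..n} :=
  [multinom (if i \in F then 0%N else e i) | i < n].

Lemma resE F e i : res F e i = if i \in F then 0%N else e i.
Proof. by rewrite mnmE. Qed.

Lemma res_le F e : (res F e <= e)%MM.
Proof. by apply/mnm_lepP => i; rewrite resE; case: ifP. Qed.

Lemma resD F a b : res F (a + b) = (res F a + res F b)%MM.
Proof. by apply/mnmP => i; rewrite mnmDE !resE mnmDE; case: ifP. Qed.

Lemma res_mono F a b : (a <= b)%MM -> (res F a <= res F b)%MM.
Proof. by move/mnm_lepP => H; apply/mnm_lepP => i; rewrite !resE; case: ifP => // _; exact: H. Qed.

Lemma resK F a : res F (res F a) = res F a.
Proof. apply/mnmP => i; rewrite !resE. by case: (i \in F). Qed.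

Lemma resZ F e a : Zob F a -> res F (e + a) = res F e.
Proof.
move/forallP => Za; apply/mnmP => i; rewrite !resE mnmDE; case: ifP => // Hi.
by move: (Za i); rewrite Hi /= => /eqP ->; rewrite addn0.
Qed.

Lemma Bp_res B F t e : (forall a, B a -> B (res F a)) -> Bp B t e -> Bp B t (res F e).
Proof.
move=> HB; elim: t e => [//|t IH] e [a [b [Ba Bb le]]].
exists (res F a), (res F b); split; [exact: HB | exact: IH |].
by rewrite -resD; exact: res_mono.
Qed.


Section Phi.
Variable F : {set 'I_n}.
Definition wF (m : 'X_{1..n}) := (\sum_(i < n) (i \notin F) * m i)%N.
Definition hF (i : 'I_n) : {poly R} := ('X_i : R)%:P * 'X^(i \notin F).
Definition PhiF (p : R) : {poly R} := mmap (polyC \o @mpolyC n k) hF p.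

Lemma PhiM p q : PhiF (p * q) = PhiF p * PhiF q.
Proof. exact: (mmap_is_multiplicative hF (polyC \o @mpolyC n k)).1. Qed.

Lemma mmap1F m : mmap1 hF m = ('X_[m] : R)%:P * 'X^(wF m).
Proof.
rewrite /mmap1 /hF.
under eq_bigr do rewrite exprMn -rmorphXn -exprM.
by rewrite big_split /= -rmorph_prod prodrXr [('X_[m] : R)]mpolyXE_id.
Qed.

Lemma coefXw (q : R) w d : (q%:P * 'X^w)`_d = if w == d then q else 0.
Proof.
rewrite coefMXn coefC; case: (ltngtP d w) => [lt|gt|->].
- by [].
- by rewrite subn_eq0 leqNgt gt.
- by rewrite subnn eqxx.
Qed.

Lemma mcoeff_sumX (s : seq 'X_{1..n}) (c : 'X_{1..n} -> k) e : uniq s ->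
  (\sum_(m <- s) c m *: 'X_[m] : R)@_e = if e \in s then c e else 0.
Proof.
move=> us; rewrite raddf_sum /=.
under eq_bigr do rewrite mcoeffZ mcoeffX.
case: ifP => He.
- rewrite (bigD1_seq e) //= eqxx mulr1 big1 ?addr0 // => m /negbTE ->.
  by rewrite mulr0.
- rewrite big1_seq // => m /andP [_ Hm].
  have -> : (m == e) = false.
    by apply/negbTE; apply/eqP => Eme; move: He; rewrite -Eme Hm.
  by rewrite mulr0.
Qed.

Lemma PhiE p d : (PhiF p)`_d =
  \sum_(m <- msupp p) (if wF m == d then p@_m else 0) *: 'X_[m].
Proof.
rewrite /PhiF /mmap coef_sum; apply: eq_bigr => m _.
rewrite mmap1F /= mulrA -rmorphM coefXw mul_mpolyC.
by case: ifP => _ //; rewrite scale0r.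
Qed.

Lemma PhiC p d e : ((PhiF p)`_d)@_e = if wF e == d then p@_e else 0.
Proof.
rewrite PhiE mcoeff_sumX ?msupp_uniq //.
case: (boolP (e \in msupp p)) => He //=.
by rewrite (memN_msupp_eq0 He); case: ifP.
Qed.

Lemma Phi_supp p d e : e \in msupp ((PhiF p)`_d) -> e \in msupp p /\ wF e = d.
Proof.
rewrite mcoeff_msupp PhiC; case: (eqVneq (wF e) d) => [E H|E].
  by rewrite mcoeff_msupp.
by rewrite eqxx.
Qed.

Lemma w0Z e : wF e = 0%N -> Zob F e.
Proof.
move/eqP; rewrite /wF sum_nat_eq0 => /forallP H.
apply/forallP => i; apply/implyP => Hi; move: (H i) => /=.
by rewrite Hi mul1n.
Qed.

Lemma Zw0 e : Zob F e -> wF e = 0%N.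
Proof.
move/forallP => H; rewrite /wF big1 // => i _.
case: (boolP (i \in F)) => Hi /=; first by rewrite mul0n.
by move: (H i); rewrite Hi /= => /eqP ->; rewrite muln0.
Qed.

End Phi.

Lemma coef_low (S : nzRingType) (p q : {poly S}) d0 :
  (forall d, (d < d0)%N -> q`_d = 0) -> (p * q)`_d0 = p`_0 * q`_d0.
Proof.
move=> H; rewrite coefM big_ord_recl big1 ?addr0 ?subn0 // => j _.
rewrite H ?mulr0 // lift0; move: (ltn_ord j); lia.
Qed.

Opaque PhiF.
Lemma SAT F (G : 'X_{1..n} -> Prop) g f :
  upc G -> (forall e a, Zob F a -> G (e + a)%MM -> G e) ->
  ~ PFk F g -> Lp G (g * f) -> Lp G f.
Proof.
move=> uG stG nPg Hgf.
pose gb e := if excluded_middle_informative (G e) then true else false.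
have gbP e : reflect (G e) (gb e).
  by rewrite /gb; case: excluded_middle_informative => H; constructor.
pose fb : R := \sum_(e <- msupp f) (if gb e then 0 else f@_e) *: 'X_[e].
have fbC e : fb@_e = if gb e then 0 else f@_e.
  rewrite mcoeff_sumX ?msupp_uniq //.
  case: (boolP (e \in msupp f)) => He //=.
  by rewrite (memN_msupp_eq0 He); case: ifP.
have LG : is_ideal (Lp G) := Lp_ideal uG.
have Hfg : Lp G (f - fb).
  move=> e; rewrite mcoeff_msupp mcoeffB fbC; case: (gbP e) => // _.
  by rewrite subrr eqxx.
have Hfb : forall e, e \in msupp fb -> ~ G e.
  move=> e; rewrite mcoeff_msupp fbC; case: (gbP e) => // _.
  by rewrite eqxx.
have Hgfb : Lp G (g * fb).
  have -> : g * fb = g * f + (-1) * (g * (f - fb)) by ring.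
  case: LG => _ HD HM; exact: (HD _ _ Hgf (HM _ _ (HM _ _ Hfg))).
suff fb0 : fb = 0 by move: Hfg; rewrite fb0 subr0.
apply/eqP; apply/negPn/negP => nz.
have [a Ha Za] := notPF_supp nPg.
pose P d := (PhiF F fb)`_d != 0.
have exP : exists d, P d.
  exists (wF F (mlead fb)); rewrite /P; apply/eqP => /(congr1 (mcoeff (mlead fb))).
  rewrite PhiC eqxx mcoeff0; apply/eqP; by rewrite -mcoeff_msupp mlead_supp.
case: (ex_minnP exP) => d0 Pd0 mind.
have g0 : (PhiF F g)`_0 != 0.
  apply/eqP => /(congr1 (mcoeff a)); rewrite PhiC Zw0 // eqxx mcoeff0.
  by apply/eqP; rewrite -mcoeff_msupp.
have key : (PhiF F (g * fb))`_d0 = (PhiF F g)`_0 * (PhiF F fb)`_d0.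
  rewrite PhiM; apply: coef_low => d Hd.
  case: (boolP (P d)) => [/mind|]; first by move=> H; exfalso; move: H Hd; lia.
  rewrite /P negbK => /eqP H. 
  exact: H.
have nz2 : (PhiF F (g * fb))`_d0 != 0.
  rewrite key; exact: (mulf_neq0 g0 Pd0).
have He := mlead_supp nz2.
set e := mlead _ in He.
have [Hegfb _] := Phi_supp He.
move: He; rewrite key => /msuppM_le /allpairsP [[a' b'] /= [Ha' Hb' Ee]].
have [_ wa'] := Phi_supp Ha'.
have [Hb'fb _] := Phi_supp Hb'.
apply: (Hfb b' Hb'fb); apply: (stG b' a' (w0Z wa')).
rewrite addmC -Ee; exact: Hgfb e Hegfb.
Qed.


Lemma common F (Q : nat -> R -> Prop) m : prime_ideal (PFk F) ->
  (forall i g h, Q i g -> Q i (h * g)) ->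
  (forall i, (1 <= i <= m)%N -> exists g, ~ PFk F g /\ Q i g) ->
  exists G, ~ PFk F G /\ forall i, (1 <= i <= m)%N -> Q i G.
Proof.
move=> [_ nP1 Pm] HQ; elim: m => [|m IH] H.
  by exists 1; split=> // i /andP [a b]; move: (leq_trans a b).
have [G1 [nG1 HG1]] : exists G, ~ PFk F G /\ forall i, (1 <= i <= m)%N -> Q i G.
  apply: IH => i /andP [a b]; apply: H; rewrite a /=; exact: leqW.
have [g2 [ng2 Hg2]] := H m.+1 (leqnn _).
exists (G1 * g2); split; first by case/Pm.
move=> i /andP [a b]; move: b; rewrite leq_eqVlt => /orP [/eqP -> | b].
  exact: HQ.
rewrite mulrC; apply: HQ; apply: HG1; by rewrite a.
Qed.

Section Main.
Variables (I : pset k n) (M : 'X_{1..n} -> Prop).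
Hypothesis HM : forall f, I f <-> ideal_gen (fun g : R => exists m, M m /\ g = 'X_[m]) f.

Lemma I_ideal : is_ideal I.
Proof.
case: (gen_ideal (fun g : R => exists m, M m /\ g = 'X_[m])) => H0 HD HMu; split.
- by apply/HM.
- move=> f g /HM Hf /HM Hg; apply/HM; exact: HD.
- move=> r f /HM Hf; apply/HM; exact: HMu.
Qed.

Lemma T2 F t f : prime_ideal (PFk F) ->
  ideal_pow (component I F) t f -> component (ideal_pow I t) F f.
Proof. move=> HP; exact: comp_pow HP I_ideal f. Qed.

Lemma T1 F t f : prime_ideal (PFk F) ->
  component (ideal_pow I t) F f -> ideal_pow (component I F) t f.
Proof.
move=> HP [g [nPg Hgf]].
pose B' := fun a => exists m, M m /\ (res F m <= a)%MM.
have B'res : forall a, B' a -> B' (res F a).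
  move=> a [m [Mm le]]; exists m; split=> //; rewrite -(resK F m); exact: res_mono.
have H1 : Lp (Bp (upM M) t) (g * f).
  move: Hgf; apply: gen_min; first by apply: Lp_ideal; exact: Bp_upc.
  move=> _ [a [Ha ->]]; apply: prod_Lp => j; apply: gen_mono_fwd; apply/HM; exact: Ha.
have H2 : Lp (Bp B' t) (g * f).
  move=> e /H1; apply: Bp_mono => a [m [Mm le]]; exists m; split=> //.
  exact: lepm_trans (res_le F m) le.
have H3 : Lp (Bp B' t) f.
  apply: (SAT (F:=F) _ _ nPg H2); first exact: Bp_upc.
  move=> e a Za He; have := Bp_res B'res He; rewrite resZ // => H.
  exact: Bp_upc H (res_le F e).
apply: (monoLp (B:=B') (comp_ideal HP I_ideal)) H3.
move=> b [m [Mm le]]; rewrite -(submK le) mpolyXD.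
case: (comp_ideal HP I_ideal) => _ _ HMc; apply: HMc.
exists 'X_[m - res F m]; split.
- apply: X_notin_PF; apply/forallP => i; apply/implyP => Hi.
  by rewrite mnmBE resE (negbTE Hi) subnn.
- rewrite -mpolyXD submK ?res_le //; apply/HM; apply: gen_sub; by exists m.
Qed.

Lemma main t :
  (integrally_closed (symbolic_pow I t) <->
   (forall F : {set 'I_n}, inFI I F ->
      integrally_closed (ideal_pow (component I F) t))).
Proof.
split.
- move=> Hcl F HF r [m [a [Hm Ha Heq]]].
  have HP : prime_ideal (PFk F) by case: HF.
  have [_ nP1 Pm] := HP.
  have [G [nPG HG]] : exists G, ~ PFk F G /\
      forall i, (1 <= i <= m)%N -> ideal_pow (ideal_pow I t) i (G * a i).
    apply: (common (Q := fun i g => ideal_pow (ideal_pow I t) i (g * a i)) HP).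
      move=> i g h Hg; rewrite -mulrA.
      by case: (pow_ideal (ideal_pow I t) i) => _ _ HMp; apply: HMp.
    move=> i Hi; have := Ha i Hi.
    move/(pow_mono (K := component (ideal_pow I t) F) (fun f => T2 HP)).
    by move/(comp_pow HP (pow_ideal I t)).
  have IS : forall f, ideal_pow I t f -> symbolic_pow I t f.
    move=> f Hf F' [HP' _ _]; exists 1; split; [by case: HP' | by rewrite mul1r].
  have : symbolic_pow I t (G * r).
    apply: Hcl; exists m, (fun i => G ^+ i * a i); split => //.
    + move=> i Hi; apply: (pow_mono IS).
      case/andP: (Hi) => i1 im.
      have -> : G ^+ i = G ^+ i.-1 * G by rewrite -exprSr prednK.
      rewrite -mulrA; case: (pow_ideal (ideal_pow I t) i) => _ _ HMp; apply: HMp.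
      exact: HG.
    + have -> : (G * r) ^+ m +
          \sum_(1 <= i < m.+1) (G ^+ i * a i) * (G * r) ^+ (m - i) =
          G ^+ m * (r ^+ m + \sum_(1 <= i < m.+1) a i * r ^+ (m - i)).
        rewrite mulrDr exprMn mulr_sumr; congr (_ + _).
        apply: eq_big_nat => i /andP [_ im].
        by rewrite exprMn mulrACA -exprD subnKC.
      by rewrite Heq mulr0.
  move/(_ F HF) => [h [nPh Hh]].
  apply: (T1 HP); exists (h * G); split; first by case/Pm.
  by rewrite -mulrA.
- move=> H r [m [a [Hm Ha Heq]]] F HF.
  have HP : prime_ideal (PFk F) by case: HF.
  apply: (T2 HP); apply: (H F HF); exists m, a; split=> // i Hi.
  apply: (pow_mono _ (Ha i Hi)) => f Hf; apply: (T1 HP); exact: Hf F HF.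
Qed.

End Main.
End Proof.

Theorem proposition2p2 (k : fieldType) (n : nat) (I : {mpoly k[n]} -> Prop)
    (t : nat) :
  monomial_ideal I -> (1 <= t)%N ->
  (integrally_closed (symbolic_pow I t) <->
   (forall F : {set 'I_n}, inFI I F ->
      integrally_closed (ideal_pow (component I F) t))).
Proof.
move=> [M HM] _; exact: (main HM t).
Qed.
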